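(* Let $M$ and $k$ be positive integers with $M\geq k\geq 4$, and let $G$ be a finite simple graph with maximum degree $\Delta(G)\leq M$. Then: (1) if $\mathrm{mad}(G)<\frac{12}{5}$, then $\chi^l_k(G)\leq\left\lceil\frac{M}{k-1}\right\rceil+1$; (2) if $\mathrm{mad}(G)<\frac{8}{3}$, then $\chi^l_k(G)\leq\left\lceil\frac{M}{k-1}\right\rceil+2$; (3) if $\mathrm{mad}(G)<3$, then $\chi^l_k(G)\leq\left\lceil\frac{M}{k-1}\right\rceil+3$.
   Context: All graphs are finite, simple and undirected. The maximum average degree of $G$ is $\mathrm{mad}(G)=\max\{2|E(H)|/|V(H)| : H\subseteq G\}$. A $k$-forested coloring of $G$ is a proper vertex coloring such that, for any two color classes, the subgraph induced by the union of these two classes is a forest of maximum degree less than $k$. If $L$ assigns to each vertex $v$ a list $L(v)$ of colors, $G$ is $k$-forested $L$-colorable if it has a $k$-forested coloring in which each vertex $v$ receives a color from $L(v)$; $G$ is $k$-forested $q$-choosable if it is $k$-forested $L$-colorable for every list assignment $L$ with $|L(v)|=q$ for all $v$. The $k$-forested choice number $\chi^l_k(G)$ is the smallest $q$ such that $G$ is $k$-forested $q$-choosable. *)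

(* Defs.v *)
From mathcomp Require Import all_boot all_order all_algebra.
Set Implicit Arguments. Unset Strict Implicit. Unset Printing Implicit Defensive.
Import Order.TTheory GRing.Theory Num.Theory.

Definition simple_graph (T : finType) (e : rel T) : Prop :=
  symmetric e /\ irreflexive e.

Definition nbhd (T : finType) (e : rel T) (v : T) : {set T} := [set u | e v u].
Definition max_degree_le (T : finType) (e : rel T) (M : nat) : Prop :=
  forall v : T, #|nbhd e v| <= M.

(* Each edge of H corresponds to exactly two arcs, so #|F| = 2|E(H)|. *)
Definition is_subgraph (T : finType) (e : rel T) (S : {set T}) (F : {set T * T}) : bool :=
  [forall p : T * T, (p \in F) ==>
     [&& e p.1 p.2, p.1 \in S, p.2 \in S & (p.2, p.1) \in F]].

(* 2|E(H)|/|V(H)| for a subgraph H = (S,F); 0 when H is empty (harmless). *)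
Definition avg_deg (T : finType) (e : rel T) (H : {set T} * {set T * T}) : rat :=
  if is_subgraph e H.1 H.2 && (H.1 != set0)
  then (#|H.2|%:R / #|H.1|%:R)%R else 0%R.

Definition mad (T : finType) (e : rel T) : rat :=
  (\big[Num.max/0%R]_(H : {set T} * {set T * T}) avg_deg e H)%R.

Definition induces_forest (T : finType) (e : rel T) (A : {set T}) : Prop :=
  forall s : seq T, uniq s -> 2 < size s -> all (fun x => x \in A) s -> ~~ cycle e s.

Definition induced_maxdeg_lt (T : finType) (e : rel T) (A : {set T}) (k : nat) : Prop :=
  forall v, v \in A -> #|nbhd e v :&: A| < k.

Definition forested_coloring (T : finType) (e : rel T) (k : nat) (c : T -> nat) : Prop :=
  (forall u v, e u v -> c u != c v) /\
  (forall a b : nat, a != b ->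
     let A := [set v | (c v == a) || (c v == b)] in
     induces_forest e A /\ induced_maxdeg_lt e A k).

Definition forested_choosable (T : finType) (e : rel T) (k q : nat) : Prop :=
  forall L : T -> seq nat, (forall v, uniq (L v) /\ size (L v) = q) ->
    exists c : T -> nat, forested_coloring e k c /\ forall v, c v \in L v.

Definition forested_choice_number_le (T : finType) (e : rel T) (k n : nat) : Prop :=
  exists2 q, q <= n & forested_choosable e k q.

Definition ceil_div (m d : nat) : nat := (m + d.-1) %/ d.

(* Main.v *)
Require Import Defs.
From mathcomp Require Import all_boot all_order all_algebra.
From mathcomp Require Import zify.
Import Order.TTheory GRing.Theory Num.Theory.
Set Implicit Arguments. Unset Strict Implicit. Unset Printing Implicit Defensive.

Lemma arith1 a b x y : a <= x -> b.+1 <= y -> (a + b).+2 <= x + y + 1.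
Proof. lia. Qed.

Lemma arith2 a b x y r : a <= x -> b.+1 <= y -> (a + b + r).+1 <= x + y + r.
Proof. lia. Qed.

Section Graph.
Variables (T : finType) (e : rel T) (k : nat).
Hypotheses (esym : symmetric e) (eirr : irreflexive e) (k4 : 3 < k).
Variable L : T -> seq nat.

Definition degS (S : {set T}) x := #|nbhd e x :&: S|.
Definition pairset (S : {set T}) (c : T -> nat) a b :=
  [set v in S | (c v == a) || (c v == b)].
Definition valid (S : {set T}) (c : T -> nat) : Prop :=
  [/\ forall v, v \in S -> c v \in L v,
      forall u v, u \in S -> v \in S -> e u v -> c u != c v &
      forall a b, a != b -> induces_forest e (pairset S c a b) /\
                             induced_maxdeg_lt e (pairset S c a b) k].
Definition upd (c : T -> nat) v a := fun z => if z == v then a else c z.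
Definition ncol (S : {set T}) (c : T -> nat) u (a : nat) := #|[set y in nbhd e u :&: S | c y == a]|.

Lemma two_col (x y p q r : nat) : (p == x) || (p == y) -> (q == x) || (q == y) ->
  (r == x) || (r == y) -> p != q -> p != r -> q == r.
Proof. by do 3 case/orP=> /eqP->; rewrite ?eqxx. Qed.

Lemma inN x y : (y \in nbhd e x) = e x y.
Proof. by rewrite inE. Qed.

Lemma ext1 (S : {set T}) (c : T -> nat) v a : v \notin S -> valid S c -> a \in L v ->
 (forall u, u \in S -> e v u -> c u != a) ->
 (forall u, u \in S -> e v u -> ncol S c u a < k.-1) ->
 (forall b, ncol S c v b < k) ->
 (forall u1 u2 p, u1 \in S -> u2 \in S -> e v u1 -> e v u2 -> u1 != u2 -> c u1 = c u2 ->
     uniq (u1 :: p) -> path e u1 p -> last u1 p = u2 ->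
     all (fun y => (y \in S) && ((c y == a) || (c y == c u1))) p -> False) ->
 valid (v |: S) (upd c v a).
Proof.
move=> vS [cL cP cF] aL Hi Hii Hiii Hiv.
have updv : upd c v a v = a by rewrite /upd eqxx.
have updS z : z \in S -> upd c v a z = c z.
  by move=> zS; rewrite /upd; case: eqP => // zv; move: zS; rewrite zv (negbTE vS).
split.
- move=> z; rewrite in_setU1; case/orP=> [/eqP->|zS]; first by rewrite updv.
  by rewrite updS //; apply: cL.
- move=> x y; rewrite !in_setU1.
  case/orP=> [/eqP->|xS]; case/orP=> [/eqP->|yS].
  + by rewrite eirr.
  + by move=> evy; rewrite updv updS // eq_sym Hi.
  + by move=> exv; rewrite updv updS // Hi // esym.
  + by move=> exy; rewrite !updS //; apply: cP.
move=> x y xy.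
have [oF oD] := cF x y xy.
split.
- move=> s us ss alls; apply/negP => cs.
  case vs: (v \in s); last first.
    apply: (negP (oF s us ss _)) => //; apply/allP => z zs.
    have := allP alls z zs; rewrite !inE.
    case/andP => /orP[/eqP zv|zS]; first by rewrite -zv zs in vs.
    by rewrite updS // => ->; rewrite zS.
  case: (rot_to vs) => i s' Hrot.
  have us' : uniq (v :: s') by rewrite -Hrot rot_uniq.
  have cs' : cycle e (v :: s') by rewrite -Hrot rot_cycle.
  have ss' : 2 < size (v :: s') by rewrite -Hrot size_rot.
  have alls' : all (fun z => z \in pairset (v |: S) (upd c v a) x y) (v :: s').
    by apply/allP => z; rewrite -Hrot mem_rot => zs; apply: (allP alls).
  case: s' us' cs' ss' alls' {Hrot} => [//|u1 p] us' cs' ss' alls'.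
  rewrite /= rcons_path in cs'.
  case/andP: cs' => evu1 /andP[pp elast].
  set u2 := last u1 p in elast.
  have vnotin : v \notin u1 :: p by case/andP: us'.
  have inS z : z \in u1 :: p -> z \in S.
    move=> zin; have := allP alls' z; rewrite inE zin orbT => /(_ isT).
    rewrite !inE; case/andP=> /orP[/eqP zv|//]; by move: vnotin; rewrite -zv zin.
  have pne : p != [::] by case: (p) ss'.
  have u12 : u1 != u2.
    rewrite /u2; move: pne (andP us').2; case: (p) => [//|y0 p'] _ /=.
    rewrite !inE negb_or => /andP[/andP[Hn Hn'] _].
    apply/eqP=> E; move: (mem_last y0 p'); rewrite -E inE (negbTE Hn).
    by rewrite (negbTE Hn').
  have u1S : u1 \in S by apply: inS; rewrite inE eqxx.
  have u2S : u2 \in S by apply: inS; apply: mem_last.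
  have colv : (a == x) || (a == y).
    have := allP alls' v; rewrite inE eqxx /= => /(_ isT).
    by rewrite !inE eqxx updv.
  have colz z : z \in u1 :: p -> (c z == x) || (c z == y).
    move=> zin; have := allP alls' z; rewrite inE zin orbT => /(_ isT).
    by rewrite !inE updS ?inS // => /andP[].
  have other z : z \in S -> e v z -> z \in u1 :: p ->
      c z = (if a == x then y else x).
    move=> zS evz zin; have H1 := Hi z zS evz; have H2 := colz z zin.
    case: (a =P x) => [Eax|Nax].
      case/orP: H2 => /eqP E //.
      by move: H1; rewrite E Eax eqxx.
    have Eay : a = y by case/orP: colv => /eqP.
    case/orP: H2 => /eqP E //.
    by move: H1; rewrite E Eay eqxx.
  have c12 : c u1 = c u2.
    rewrite (other u1) ?inE ?eqxx // (other u2) //; last by apply: mem_last.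
    by rewrite esym.
  apply: (Hiv u1 u2 p u1S u2S evu1 _ u12 c12 (andP us').2 pp (erefl _)).
    by rewrite esym.
  apply/allP => z zp.
  have zin : z \in u1 :: p by rewrite inE zp orbT.
  rewrite inS //=.
  rewrite (other u1) ?inE ?eqxx //.
  have := colz z zin; case: (a =P x) => [->|Nax] //.
  have -> : a = y by case/orP: colv => /eqP.
  by rewrite orbC.
- move=> z; rewrite !inE => /andP[/orP[/eqP zv|zS] colzz].
    subst z; rewrite updv in colzz.
    set b := if a == x then y else x.
    apply: (leq_ltn_trans _ (Hiii b)); apply: subset_leq_card.
    apply/subsetP => w; rewrite !inE => /andP[evw /andP[/orP[/eqP wv|wS] cw]].
      by rewrite wv eirr in evw.
    rewrite evw wS /=; move: cw; rewrite updS // => cw.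
    have H1 := Hi w wS evw.
    rewrite /b; case: (a =P x) => [Eax|Nax].
      by case/orP: cw => /eqP E //; move: H1; rewrite E Eax eqxx.
    have Eay : a = y by case/orP: colzz => /eqP.
    by case/orP: cw => /eqP E //; move: H1; rewrite E Eay eqxx.
  rewrite updS // in colzz.
  case H: (e z v && ((a == x) || (a == y))).
    case/andP: H => ezv colv.
    have evz : e v z by rewrite esym.
    have H1 := Hii z zS evz.
    apply: (@leq_ltn_trans (#|[set v] :|: [set y0 in nbhd e z :&: S | c y0 == a]|)).
      apply: subset_leq_card; apply/subsetP => w.
      rewrite !inE => /andP[ezw /andP[/orP[->//|wS] cw]].
      rewrite ezw wS /=; apply/orP; right; move: cw; rewrite updS // => cw.
      have Hzw := cP z w zS wS ezw.
      have Hz := Hi z zS evz.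
      exact: (two_col colzz cw colv Hzw Hz).
    rewrite cardsU1; have := leq_b1 (v \notin [set y0 in nbhd e z :&: S | c y0 == a]).
    move: H1; rewrite /ncol; lia.
  have zA : z \in pairset S c x y by rewrite inE zS.
  apply: (leq_ltn_trans _ (oD z zA)); apply: subset_leq_card.
  apply/subsetP => w; rewrite !inE => /andP[ezw /andP[/orP[/eqP wv|wS] cw]].
    subst w; rewrite updv in cw; by rewrite ezw cw in H.
  by rewrite ezw wS -(updS _ wS).
Qed.

Lemma rev_upath (P : pred T) u1 u2 p : uniq (u1 :: p) -> path e u1 p ->
  last u1 p = u2 -> all P p -> P u1 ->
  exists p', [/\ uniq (u2 :: p'), path e u2 p', last u2 p' = u1 & all P p'].
Proof.
move=> U Pa La Al P1; exists (rev (belast u1 p)); split.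
- by rewrite -La -rev_rcons rev_uniq -lastI.
- have H : (fun z => e^~ z) =2 e by move=> x y; exact: esym.
  by rewrite -La rev_path (eq_path H).
- case: p U Pa La Al => [|y p'] /= _ _ La _; first by [].
  by rewrite rev_cons last_rcons.
- rewrite all_rev; apply/allP => z /mem_belast; rewrite inE.
  by case/orP=> [/eqP->//|zp]; apply: (allP Al).
Qed.

Lemma path_ends (S : {set T}) (c : T -> nat) a b u1 u2 p :
  (forall x y, x \in S -> y \in S -> e x y -> c x != c y) ->
  u1 \in S -> u2 \in S -> u1 != u2 -> c u1 = b -> c u2 = b ->
  path e u1 p -> last u1 p = u2 ->
  all (fun y => (y \in S) && ((c y == a) || (c y == b))) p ->
  (exists2 y, y \in nbhd e u1 :&: S & c y = a) /\
  (exists2 y, y \in nbhd e u2 :&: S & c y = a).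
Proof.
move=> cP u1S u2S u12 c1 c2 Pa La Al; split.
- case: p Pa La Al => [|y p'] /=; first by move=> _ E; rewrite E eqxx in u12.
  case/andP=> ey _ _ /andP[/andP[yS cy] _].
  exists y; first by rewrite !inE ey yS.
  have := cP _ _ u1S yS ey; rewrite c1.
  by case/orP: cy => /eqP -> //; rewrite eqxx.
- case/lastP: p Pa La Al => [|q z] /=; first by move=> _ E; rewrite E eqxx in u12.
  rewrite rcons_path last_rcons all_rcons => /andP[_ ey] Ez /andP[_ Alq].
  subst z; set y := last u1 q in ey.
  have : y \in u1 :: q by apply: mem_last.
  rewrite inE; case/orP=> [/eqP Ey|yq].
    by move: ey; rewrite Ey => ey; have := cP _ _ u1S u2S ey; rewrite c1 c2 eqxx.
  have /andP[yS cy] := allP Alq y yq.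
  exists y; first by rewrite !inE -esym ey yS.
  have := cP _ _ yS u2S ey; rewrite c2.
  by case/orP: cy => /eqP -> //; rewrite eqxx.
Qed.

Definition colsN (S : {set T}) (c : T -> nat) u := [seq c y | y <- enum (nbhd e u :&: S)].
Definition Sat (S : {set T}) (c : T -> nat) u :=
  [seq a <- undup (colsN S c u) | k.-1 <= ncol S c u a].

Lemma size_colsN S c u : size (colsN S c u) = degS S u.
Proof. by rewrite size_map -cardE. Qed.

Lemma mem_colsN S c u y : y \in nbhd e u :&: S -> c y \in colsN S c u.
Proof. by move=> yN; apply: map_f; rewrite mem_enum. Qed.

Lemma notin_Sat S c u a : a \notin Sat S c u -> ncol S c u a < k.-1.
Proof.
rewrite mem_filter mem_undup negb_and -ltnNge => /orP[//|acol].
suff -> : ncol S c u a = 0 by case: k k4 => [|[|[|]]].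
apply/eqP; rewrite cards_eq0; apply/eqP/setP => y; rewrite !inE.
apply/negbTE; apply/negP => /andP[yN /eqP cy]; move: acol.
by rewrite -cy (@mem_colsN S c u y) // !inE.
Qed.

Lemma Sat_size_aux S c u (s : seq nat) : uniq s ->
  (forall a, a \in s -> k.-1 <= ncol S c u a) ->
  size s * k.-1 <= #|[set y in nbhd e u :&: S | c y \in s]|.
Proof.
elim: s => [|a s IH] /=; first by rewrite mul0n.
case/andP=> as_ us H.
have -> : [set y in nbhd e u :&: S | c y \in a :: s] =
   [set y in nbhd e u :&: S | c y == a] :|: [set y in nbhd e u :&: S | c y \in s].
  by apply/setP => y; rewrite !inE; case: (e u y); case: (y \in S); case: (c y == a); case: (c y \in s).
rewrite cardsU.
have -> : [set y in nbhd e u :&: S | c y == a] :&: [set y in nbhd e u :&: S | c y \in s] = set0.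
  apply/setP => y; rewrite !inE; apply/negbTE; apply/negP.
  by case/andP=> /andP[_ /eqP cy] /andP[_ ys]; move: as_; rewrite -cy ys.
rewrite cards0 subn0 mulSn.
apply: leq_add; first by apply: H; rewrite inE eqxx.
apply: IH => // b bs; apply: H; by rewrite inE bs orbT.
Qed.

Lemma Sat_size S c u : size (Sat S c u) * k.-1 <= degS S u.
Proof.
have U : uniq (Sat S c u) by rewrite filter_uniq // undup_uniq.
have H a : a \in Sat S c u -> k.-1 <= ncol S c u a by rewrite mem_filter => /andP[].
apply: leq_trans (Sat_size_aux U H) _.
by apply: subset_leq_card; apply/subsetP => y; rewrite inE => /andP[].
Qed.

Lemma Sat_size_div S c u : size (Sat S c u) <= degS S u %/ k.-1.
Proof.
by rewrite leq_divRL ?Sat_size //; case: k k4 => [|[|]].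
Qed.

Lemma pick_col v (F : seq nat) : uniq (L v) -> size F < size (L v) ->
  exists2 a, a \in L v & a \notin F.
Proof.
move=> U sz; case: (boolP (all (fun a => a \in F) (L v))) => [H|/allPn //].
have := uniq_leq_size U (fun a aL => allP H a aL); by rewrite leqNgt sz.
Qed.

Lemma ncol_le S c u a : ncol S c u a <= degS S u.
Proof. by apply: subset_leq_card; apply/subsetP => y; rewrite inE => /andP[]. Qed.


Lemma red_two (S : {set T}) (c : T -> nat) v u w a : v \notin S -> valid S c ->
  u \in S -> w \in S -> u != w ->
  nbhd e v :&: S = [set u; w] -> a \in L v -> a != c u -> a != c w ->
  a \notin Sat S c u -> a \notin Sat S c w ->
  (c u = c w -> forall p, uniq (u :: p) -> path e u p -> last u p = w ->
      all (fun y => (y \in S) && ((c y == a) || (c y == c u))) p -> False) ->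
  valid (v |: S) (upd c v a).
Proof.
move=> vS cv uS wS uw Nv aL au aw su sw Hcyc.
have inNv z : z \in S -> e v z -> (z == u) || (z == w).
  move=> zS evz; have : z \in nbhd e v :&: S by rewrite !inE evz zS.
  by rewrite Nv !inE.
apply: ext1 => //.
- move=> z zS evz; case/orP: (inNv z zS evz) => /eqP->; by rewrite eq_sym.
- move=> z zS evz; apply: notin_Sat.
  by case/orP: (inNv z zS evz) => /eqP->.
- move=> b; apply: (leq_ltn_trans (ncol_le _ _ _ _)).
  by rewrite /degS Nv cards2; have := leq_b1 (u != w); lia.
move=> u1 u2 p u1S u2S e1 e2 u12 c12.
case/orP: (inNv u1 u1S e1) => /eqP E1; case/orP: (inNv u2 u2S e2) => /eqP E2;
  subst u1 u2; rewrite ?eqxx // in u12.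
- exact: (Hcyc c12).
- move=> U Pa La Al.
  have Pw : (w \in S) && ((c w == a) || (c w == c w)) by rewrite wS eqxx orbT.
  have [p' [U' Pa' La' Al']] := rev_upath U Pa La Al Pw.
  apply: (Hcyc (sym_eq c12) p' U' Pa' La').
  by rewrite -c12.
Qed.

Lemma red_two_cols (S : {set T}) (c : T -> nat) v u w a : v \notin S -> valid S c ->
  u \in S -> w \in S -> u != w ->
  nbhd e v :&: S = [set u; w] -> a \in L v -> a != c u -> a != c w ->
  a \notin Sat S c u -> a \notin Sat S c w ->
  (c u = c w -> a \notin colsN S c u) ->
  valid (v |: S) (upd c v a).
Proof.
move=> vS cv uS wS uw Nv aL au aw su sw Hc.
apply: (red_two (u:=u) (w:=w)) => // cuw p U Pa La Al.
have [cL cP _] := cv.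
have [[y yN cy] _] := path_ends cP uS wS uw (erefl _) (sym_eq cuw) Pa La Al.
by move: (Hc cuw); rewrite -cy (mem_colsN c yN).
Qed.

Lemma red_one (S : {set T}) (c : T -> nat) v a : v \notin S -> valid S c ->
  degS S v <= 1 -> a \in L v ->
  (forall u, u \in nbhd e v :&: S -> (a != c u) && (a \notin Sat S c u)) ->
  valid (v |: S) (upd c v a).
Proof.
move=> vS cv dv aL H.
apply: ext1 => //.
- move=> z zS evz; have zN : z \in nbhd e v :&: S by rewrite !inE evz zS.
  by have /andP[] := H z zN; rewrite eq_sym.
- move=> z zS evz; apply: notin_Sat.
  have zN : z \in nbhd e v :&: S by rewrite !inE evz zS.
  by have /andP[] := H z zN.
- by move=> b; apply: (leq_ltn_trans (ncol_le _ _ _ _)); apply: (leq_ltn_trans dv); lia.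
move=> u1 u2 p u1S u2S e1 e2 u12.
have : #|[set u1; u2]| <= degS S v.
  by apply: subset_leq_card; apply/subsetP => z; rewrite !inE => /orP[]/eqP->;
    rewrite ?e1 ?e2.
by rewrite cards2 u12 => H2; have := leq_trans H2 dv.
Qed.

Variables (M q : nat).
Hypotheses (kM : k <= M) (maxdeg : forall v, #|nbhd e v| <= M)
  (Lok : forall v, uniq (L v) /\ size (L v) = q).
Definition colorable (S : {set T}) := exists c, valid S c.
Notation d := (ceil_div M k.-1).

Lemma dE : d = M.-1 %/ k.-1 + 1.
Proof.
rewrite /ceil_div.
have -> : M + k.-1.-1 = M.-1 + k.-1 by lia.
have k1 : 0 < k.-1 by lia.
by rewrite divnDr // divnn k1.
Qed.

Lemma d2 : 2 <= d.
Proof.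
rewrite dE; suff : 1 <= M.-1 %/ k.-1 by lia.
by rewrite leq_divRL ?mul1n; lia.
Qed.

Lemma degS_lt (Sc S : {set T}) u v : Sc \subset S -> v \in S -> v \notin Sc -> e u v ->
  degS Sc u < degS S u.
Proof.
move=> sub vS vSc euv; apply: proper_card; apply/properP; split.
  by apply/subsetP => y; rewrite !inE => /andP[-> /(subsetP sub) ->].
by exists v; rewrite !inE ?euv ?vS // (negbTE vSc) andbF.
Qed.

Lemma degS_M (S : {set T}) u v : v \notin S -> e u v -> degS S u <= M.-1.
Proof.
move=> vS euv; have := maxdeg u.
have : degS S u < degS setT u.
  by apply: (degS_lt (v:=v)) => //; rewrite ?subsetT ?inE.
have -> : degS setT u = #|nbhd e u| by rewrite /degS setIT.
lia.
Qed.

Lemma Sat_bound (S : {set T}) c u v : v \notin S -> e u v -> (size (Sat S c u)).+1 <= d.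
Proof.
move=> vS euv; rewrite dE addn1 ltnS.
apply: (leq_trans (Sat_size_div _ _ _)); apply: leq_div2r; exact: degS_M euv.
Qed.

Lemma Sat_nil (S : {set T}) c u : degS S u < k.-1 -> size (Sat S c u) = 0.
Proof.
move=> H; apply/eqP; rewrite -leqn0.
by apply: (leq_trans (Sat_size_div _ _ _)); rewrite divn_small.
Qed.

Lemma val_nil : colorable set0.
Proof.
exists (fun v => head 0 (L v)); split.
- by move=> v; rewrite inE.
- by move=> u v; rewrite inE.
move=> a b _; split.
  move=> [|x s] // _ _ /andP[]; by rewrite !inE.
by move=> v; rewrite !inE.
Qed.

Lemma notin_flat (c : T -> nat) (S : {set T}) (N : {set T}) a :
  a \notin flatten [seq c u :: Sat S c u | u <- enum N] ->
  forall u, u \in N -> (a != c u) && (a \notin Sat S c u).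
Proof.
move=> H u uN; rewrite -negb_or; apply/negP => Hor; move/negP: H; apply.
by apply/flatten_mapP; exists u; rewrite ?mem_enum // inE.
Qed.

Lemma conf_one (S : {set T}) v : v \in S -> degS S v <= 1 -> colorable (S :\ v) -> d < q ->
  colorable S.
Proof.
move=> vS dv [c cv] dq.
have vS' : v \notin S :\ v by rewrite !inE eqxx.
have dv' : degS (S :\ v) v <= 1.
  apply: leq_trans dv; apply: subset_leq_card; apply/subsetP => y.
  by rewrite !inE => /andP[-> /andP[_ ->]].
set F := flatten [seq c u :: Sat (S :\ v) c u | u <- enum (nbhd e v :&: (S :\ v))].
have sF : size F < q.
  rewrite /F; case: (leqP (degS (S :\ v) v) 0) => [d0|d1].
    move: d0; rewrite leqn0 /degS cards_eq0 => /eqP ->.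
    by rewrite enum_set0 /=; apply: leq_ltn_trans dq; exact: (leq_trans _ d2).
  have /cards1P [u Eu] : #|nbhd e v :&: (S :\ v)| == 1 by rewrite eqn_leq dv' d1.
  rewrite Eu enum_set1 /= cats0.
  have : u \in nbhd e v :&: (S :\ v) by rewrite Eu inE.
  rewrite !inE => /andP[evu _].
  have euv : e u v by rewrite esym.
  by apply: leq_ltn_trans dq; exact: (Sat_bound c vS' euv).
have [U sz] := Lok v.
have [a aL aF] : exists2 a, a \in L v & a \notin F by apply: pick_col; rewrite ?sz.
exists (upd c v a); rewrite -(setD1K vS).
by apply: red_one => //; apply: notin_flat.
Qed.

Lemma NS_D1 (S : {set T}) v : nbhd e v :&: (S :\ v) = nbhd e v :&: S.
Proof.
apply/setP => y; rewrite !inE; case evy: (e v y) => //=.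
by case: eqP => // E; rewrite E eirr in evy.
Qed.

Lemma conf_two (S : {set T}) v u w su sw du : v \in S -> u != w ->
  nbhd e v :&: S = [set u; w] -> colorable (S :\ v) ->
  (forall c, size (Sat (S :\ v) c u) <= su) -> (forall c, size (Sat (S :\ v) c w) <= sw) ->
  degS (S :\ v) u <= du -> su + sw + 2 < q -> su + sw + du + 1 < q -> colorable S.
Proof.
move=> vS uw Nv [c cv] Hsu Hsw Hdu q1 q2.
have vS' : v \notin S :\ v by rewrite !inE eqxx.
have Nv' : nbhd e v :&: (S :\ v) = [set u; w] by rewrite NS_D1.
have uS : u \in S :\ v by move: (set21 u w); rewrite -Nv' => /setIP[].
have wS : w \in S :\ v by move: (set22 u w); rewrite -Nv' => /setIP[].
set F := if c u == c w then c u :: Sat (S :\ v) c u ++ Sat (S :\ v) c w ++ colsN (S :\ v) c u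
         else c u :: c w :: Sat (S :\ v) c u ++ Sat (S :\ v) c w.
have sF : size F < q.
  rewrite /F; case: (c u == c w) => /=; rewrite !size_cat ?size_colsN;
    have := Hsu c; have := Hsw c; lia.
have [U sz] := Lok v.
have [a aL aF] : exists2 a, a \in L v & a \notin F by apply: pick_col; rewrite ?sz.
exists (upd c v a); rewrite -(setD1K vS).
move: aF; rewrite /F; case: eqP => [cuw|cuw]; rewrite !inE !mem_cat !negb_or.
  case/andP=> au /andP[su' /andP[sw' cl]].
  by apply: (red_two_cols (u:=u) (w:=w)) => //; rewrite -?cuw.
case/andP=> au /andP[aw /andP[su' sw']].
by apply: (red_two_cols (u:=u) (w:=w)).
Qed.

Lemma card_le1 (R : {set T}) : #|R| <= 1 -> R = set0 \/ exists r, R = [set r].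
Proof.
case: (posnP #|R|) => [/cards0_eq|R1 R2]; first by left.
by right; apply/cards1P; rewrite eqn_leq R1 R2.
Qed.

Lemma conf_multi (S : {set T}) u (vs' : seq T) vl (wf : T -> T) (R : {set T}) :
  u \in S -> uniq (rcons vs' vl) ->
  (forall v, v \in rcons vs' vl -> v \in S /\ nbhd e v :&: S = [set u; wf v]) ->
  (forall v, v \in rcons vs' vl -> wf v != u /\ wf v \notin rcons vs' vl) ->
  nbhd e u :&: S = [set x in rcons vs' vl] :|: R -> #|R| <= 1 ->
  colorable (S :\: (u |: [set x in rcons vs' vl])) ->
  #|R| * d + size vs' < q ->
  (degS S u).-1 %/ k.-1 + d + 1 < q ->
  (degS S u).-1 %/ k.-1 + d + #|R| < q ->
  colorable S.
Proof.
set vs := rcons vs' vl.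
move=> uS Uvs Hv Hw Nu R1 [c0 cv0] qA qB qC.
set S0 := S :\: (u |: [set x in vs]) in cv0.
have S0E y : (y \in S0) = [&& y != u, y \notin vs & y \in S].
  by rewrite /S0 !inE negb_or andbA.
clearbody S0.
have uS0 : u \notin S0 by rewrite S0E eqxx.
have vS0 v : v \in vs -> v \notin S0 by move=> vv; rewrite S0E vv andbF.
have vinS v : v \in vs -> v \in S by move=> /Hv[].
have Nv v : v \in vs -> nbhd e v :&: S = [set u; wf v] by move=> /Hv[].
have wS v : v \in vs -> wf v \in S.
  by move=> vv; move: (set22 u (wf v)); rewrite -(Nv v vv) => /setIP[].
have evu v : v \in vs -> e v u.
  by move=> vv; move: (set21 u (wf v)); rewrite -(Nv v vv) !inE => /andP[].
have wS0 v : v \in vs -> wf v \in S0.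
  move=> vv; have [wu wvs] := Hw v vv.
  by rewrite S0E wu wvs wS.
have RN : R \subset nbhd e u :&: S by rewrite Nu subsetUr.
have NuS0 : nbhd e u :&: S0 \subset R.
  apply/subsetP => y; rewrite inE S0E inN => /andP[euy /and3P[_ yn yS]].
  have : y \in nbhd e u :&: S by rewrite inE inN euy yS.
  by rewrite Nu in_setU inE (negbTE yn).
set F0 := flatten [seq c0 r :: Sat S0 c0 r | r <- enum R] ++ [seq c0 (wf v) | v <- vs'].
have sF0 : size F0 < q.
  apply: leq_ltn_trans qA; rewrite /F0 size_cat size_map leq_add2r.
  case: (card_le1 R1) => [->|[r Rr]]; first by rewrite enum_set0.
  rewrite Rr enum_set1 cards1 /= cats0 mul1n.
  have : r \in nbhd e u :&: S by apply: (subsetP RN); rewrite Rr inE.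
  rewrite !inE => /andP[eur _].
  by apply: (Sat_bound c0 uS0); rewrite esym.
have [Uu szu] := Lok u.
have [a0 a0L a0F] : exists2 a, a \in L u & a \notin F0 by apply: pick_col; rewrite ?szu.
move: a0F; rewrite mem_cat negb_or => /andP[a0R a0W].
set c1 := upd c0 u a0.
have cv1 : valid (u |: S0) c1.
  apply: red_one => //.
    by apply: leq_trans (subset_leq_card NuS0) R1.
  by move=> y yN; apply: (notin_flat a0R); apply: (subsetP NuS0).
have vinvs v : v \in vs' -> v \in vs by move=> vv; rewrite mem_rcons inE vv orbT.
have vu v : v \in vs -> v != u by move=> /evu evu'; apply/eqP => E; rewrite E eirr in evu'.
have c1u : c1 u = a0 by rewrite /c1 /upd eqxx.
have c1w v : v \in vs -> c1 (wf v) = c0 (wf v).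
  by move=> vv; rewrite /c1 /upd; have [wu _] := Hw v vv; rewrite (negbTE wu).
have a0w v : v \in vs' -> a0 != c0 (wf v).
  by move=> vv; apply: contraNneq a0W => ->; apply: map_f.
have Nsub (Sc : {set T}) v : v \in vs -> u \in Sc -> wf v \in Sc -> Sc \subset S ->
    nbhd e v :&: Sc = [set u; wf v].
  move=> vv uSc wSc ScS; apply/setP => y; apply/idP/idP.
    rewrite -(Nv v vv) !inE => /andP[-> /(subsetP ScS) ->] //.
  rewrite !inE => /orP[]/eqP->; rewrite ?uSc ?wSc andbT.
    exact: evu.
  by move: (set22 u (wf v)); rewrite -(Nv v vv) !inE => /andP[].
have S1S : u |: S0 \subset S.
  by apply/subsetP => y; rewrite in_setU1 S0E => /orP[/eqP->//|/and3P[_ _ ->]].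
have step2 : forall t, uniq t -> {subset t <= vs'} ->
    exists c, valid (u |: S0 :|: [set x in t]) c /\ (forall z, z \in u |: S0 -> c z = c1 z).
  elim=> [|v t IH] /=.
    move=> _ _; exists c1; split => //.
    have -> : [set x in [::]] = set0 :> {set T} by apply/setP => z; rewrite !inE.
    by rewrite setU0.
  case/andP=> vt Ut sub.
  have subt : {subset t <= vs'} by move=> z zt; apply: sub; rewrite inE zt orbT.
  have [c [cv ag]] := IH Ut subt.
  set Sc := u |: S0 :|: [set x in t] in cv.
  have vv' : v \in vs' by apply: sub; rewrite inE eqxx.
  have vv : v \in vs by apply: vinvs.
  have vSc : v \notin Sc.
    by rewrite in_setU in_setU1 !negb_or (vu v vv) (negbTE (vS0 v vv)) /= inE.
  have ScS : Sc \subset S.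
    apply/subsetP => y; rewrite inE => /orP[/(subsetP S1S)//|].
    by rewrite inE => /subt/vinvs/vinS.
  have uSc : u \in Sc by rewrite in_setU in_setU1 eqxx.
  have wSc : wf v \in Sc by rewrite in_setU in_setU1 (wS0 v vv) orbT.
  have NvSc := Nsub Sc v vv uSc wSc ScS.
  have cu : c u = a0 by rewrite ag ?c1u // in_setU1 eqxx.
  have cw : c (wf v) = c0 (wf v) by rewrite ag ?c1w // in_setU1 (wS0 v vv) orbT.
  have uw : u != wf v by rewrite eq_sym; have [] := Hw v vv.
  set F := c u :: c (wf v) :: Sat Sc c u ++ Sat Sc c (wf v).
  have sF : size F < q.
    apply: leq_ltn_trans qB; rewrite /F /= size_cat.
    have h1 : size (Sat Sc c u) <= (degS S u).-1 %/ k.-1.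
      apply: (leq_trans (Sat_size_div _ _ _)); apply: leq_div2r.
      have euv : e u v by rewrite esym; apply: evu.
      by move: (degS_lt ScS (vinS v vv) vSc euv); case: (degS S u) => [|n]; rewrite ?ltnS.
    have ewv : e (wf v) v by rewrite esym; move: (set22 u (wf v)); rewrite -(Nv v vv) !inE => /andP[].
    exact: arith1 h1 (Sat_bound c vSc ewv).
  have [Uv szv] := Lok v.
  have [a aL aF] : exists2 a, a \in L v & a \notin F by apply: pick_col; rewrite ?szv.
  move: aF; rewrite /F !inE mem_cat !negb_or => /and4P[au aw su sw].
  exists (upd c v a); split.
    have -> : u |: S0 :|: [set x in v :: t] = v |: Sc.
      by apply/setP => z; rewrite /Sc !inE; case: (z == v); case: (z == u);
        case: (z \in S0); case: (z \in t).
    apply: (red_two_cols (u:=u) (w:=wf v)) => // cuw.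
    by move: (a0w v vv'); rewrite -cu -cw cuw eqxx.
  move=> z zS1; rewrite /upd; case: eqP => [E|_]; last exact: ag.
  by move: vSc; rewrite -E in_setU zS1.
have vlvs : vl \in vs by rewrite mem_rcons mem_head.
move: (Uvs); rewrite rcons_uniq => /andP[vlvs' Uvs'].
have [c [cv ag]] := step2 vs' Uvs' (fun z zz => zz).
set Sc := u |: S0 :|: [set x in vs'] in cv.
have vSc : vl \notin Sc.
  by rewrite in_setU in_setU1 !negb_or (vu vl vlvs) (negbTE (vS0 vl vlvs)) /= inE.
have ScS : Sc \subset S.
  apply/subsetP => y; rewrite inE => /orP[/(subsetP S1S)//|].
  by rewrite inE => /vinvs/vinS.
have uSc : u \in Sc by rewrite !inE eqxx.
have wSc : wf vl \in Sc by rewrite !inE (wS0 vl vlvs) orbT.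
have NvSc := Nsub Sc vl vlvs uSc wSc ScS.
have cu : c u = a0 by rewrite ag ?c1u // in_setU1 eqxx.
have cw : c (wf vl) = c0 (wf vl) by rewrite ag ?c1w // in_setU1 (wS0 vl vlvs) orbT.
have uw : u != wf vl by rewrite eq_sym; have [] := Hw vl vlvs.
have h1 : size (Sat Sc c u) <= (degS S u).-1 %/ k.-1.
  apply: (leq_trans (Sat_size_div _ _ _)); apply: leq_div2r.
  have euv : e u vl by rewrite esym; apply: evu.
  by move: (degS_lt ScS (vinS vl vlvs) vSc euv); case: (degS S u) => [|n]; rewrite ?ltnS.
have ewv : e (wf vl) vl.
  by rewrite esym; move: (set22 u (wf vl)); rewrite -(Nv vl vlvs) !inE => /andP[].
have h2 := Sat_bound c vSc ewv.
have SE : vl |: Sc = S.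
  apply/setP => z; rewrite /Sc !inE S0E mem_rcons inE.
  case: (z =P vl) => [->|_] /=; first by rewrite vinS.
  case: (z =P u) => [->|_] /=; first by rewrite uS.
  case zv: (z \in vs') => /=; first by rewrite vinS // vinvs.
  by rewrite orbF.
set F := if c u == c (wf vl)
  then c u :: Sat Sc c u ++ Sat Sc c (wf vl) ++ [seq c r | r <- enum R]
  else c u :: c (wf vl) :: Sat Sc c u ++ Sat Sc c (wf vl).
have sF : size F < q.
  rewrite /F; case: (c u == c (wf vl)) => /=.
    apply: leq_ltn_trans qC; rewrite !size_cat size_map -cardE addnA.
    exact: arith2 h1 h2.
  apply: leq_ltn_trans qB; rewrite size_cat.
  exact: arith1 h1 h2.
have [Uv szv] := Lok vl.
have [a aL aF] : exists2 a, a \in L vl & a \notin F by apply: pick_col; rewrite ?szv.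
exists (upd c vl a); rewrite -SE.
have [cL cP cF] := cv.
move: aF; rewrite /F; case: eqP => [cuw|cuw]; last first.
  rewrite !inE mem_cat !negb_or => /and4P[au aw su sw].
  by apply: (red_two_cols (u:=u) (w:=wf vl)) => // /cuw.
rewrite !inE !mem_cat !negb_or => /and4P[au su sw aR].
apply: (red_two (u:=u) (w:=wf vl)) => //; rewrite -?cuw //.
move=> _ [|y p'] /=; first by move=> _ _ E; rewrite E eqxx in uw.
case/andP=> uyp Uyp /andP[euy Pa] La /andP[/andP[ySc cy] Al].
have cya : c y = a.
  by have := cP u y uSc ySc euy; case/orP: cy => /eqP ->; rewrite ?eqxx.
have : y \in nbhd e u :&: S by rewrite !inE euy (subsetP ScS).
rewrite Nu !inE => /orP[yvs|yR]; last first.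
  by move: aR; rewrite -cya (map_f c) // mem_enum.
have yvs' : y \in vs'.
  move: yvs; rewrite mem_rcons inE => /orP[/eqP Ey|//].
  by move: vSc; rewrite -Ey ySc.
case: p' uyp Uyp Pa La Al => [|y2 p''] /=.
  by move=> _ _ _ Ey; have [_] := Hw vl vlvs; rewrite -Ey yvs.
rewrite !inE !negb_or => /andP[_ /andP[uy2 _]] _ /andP[eyy2 _] _ /andP[/andP[y2Sc cy2] _].
have y2S : y2 \in S by apply: (subsetP ScS); rewrite !inE.
have : y2 \in nbhd e y :&: S by rewrite !inE eyy2 y2S.
rewrite (Nv y (vinvs y yvs')) !inE eq_sym (negbTE uy2) /= => /eqP Ey2.
have y2Sc' : y2 \in Sc by rewrite !inE.
have cy2a : c y2 != a by rewrite -cya eq_sym; exact: cP ySc y2Sc' eyy2.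
move: cy2; rewrite (negbTE cy2a) /= Ey2 ag ?in_setU1 ?(wS0 y (vinvs y yvs')) ?orbT // c1w ?vinvs //.
rewrite cu => /eqP E; move: (a0w y yvs'); by rewrite E eqxx.
Qed.

Lemma dcount (A B : {set T}) (w : T -> nat) :
  \sum_(x in A) \sum_(y in B | e x y) w y = \sum_(y in B) w y * #|[set x in A | e y x]|.
Proof.
under eq_bigr => x _ do rewrite big_mkcondr.
rewrite exchange_big /=; apply: eq_bigr => y _.
rewrite -big_mkcondr.
rewrite (eq_bigl (fun x => x \in [set x in A | e y x])); last first.
  by move=> x; rewrite !inE esym.
by rewrite sum_nat_const mulnC.
Qed.

Definition Aset (S : {set T}) := [set x in S | 3 <= degS S x].
Definition Bset (S : {set T}) := [set y in S | degS S y == 2].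

Lemma discharge (S : {set T}) al be (w : T -> nat) :
  (forall x, x \in S -> 2 <= degS S x) ->
  (forall x, x \in Aset S -> be + \sum_(y in Bset S | e x y) w y <= al * degS S x) ->
  (forall y, y \in Bset S -> w y * #|[set x in Aset S | e y x]| = 2) ->
  2 * al + 2 = be -> be * #|S| <= al * \sum_(v in S) degS S v.
Proof.
move=> d2S HA HB Hab.
have SA : S :&: Aset S = Aset S.
  by apply/setP => x; rewrite !inE; case: (x \in S); rewrite ?andbF.
have SB : S :\: Aset S = Bset S.
  apply/setP => x; rewrite !inE; case xS: (x \in S); rewrite ?andbF //=.
  by have := d2S x xS; rewrite -ltnNge; case: (degS S x) => [|[|[|]]].
rewrite (big_setID (Aset S)) /= SA SB.
rewrite -(cardsID (Aset S) S) SA SB.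
have EB : \sum_(v in Bset S) degS S v = 2 * #|Bset S|.
  rewrite (eq_bigr (fun _ => 2)); first by rewrite sum_nat_const mulnC.
  by move=> v; rewrite inE => /andP[_ /eqP].
have LA : \sum_(x in Aset S) (be + \sum_(y in Bset S | e x y) w y) <=
          \sum_(x in Aset S) al * degS S x by apply: leq_sum => x; apply: HA.
rewrite big_split /= sum_nat_const dcount in LA.
rewrite (eq_bigr (fun _ => 2)) ?sum_nat_const in LA; last by move=> y /HB.
rewrite -big_distrr /= in LA.
rewrite EB mulnDr; move: LA; set SA' := \sum_(i in Aset S) degS S i.
rewrite -Hab; nia.
Qed.

Definition other (S : {set T}) v u := odflt u [pick y in nbhd e v :&: S | y != u].
Definition Bx (S : {set T}) u := [set y in nbhd e u :&: S | degS S y == 2].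

Lemma nbhd_two (S : {set T}) v u : degS S v = 2 -> u \in nbhd e v :&: S ->
  nbhd e v :&: S = [set u; other S v u] /\ other S v u != u.
Proof.
move=> dv uN.
have : #|(nbhd e v :&: S) :\ u| == 1.
  by move: dv; rewrite /degS (cardsD1 u) uN add1n => -[->].
case/cards1P => y Ey.
have yN : y \in (nbhd e v :&: S) :\ u by rewrite Ey inE.
have oy : other S v u = y.
  rewrite /other; case: pickP => [z /andP[zN zu]|H] /=.
    have : z \in (nbhd e v :&: S) :\ u by rewrite in_setD1 zu zN.
    by rewrite Ey inE => /eqP.
  by move: (H y); move: yN; rewrite !inE => /andP[-> ->].
rewrite oy; split; last by move: yN; rewrite !inE => /andP[].
by rewrite -(setD1K uN) Ey.
Qed.

Lemma conf_multi' (S : {set T}) u m :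
  u \in S -> 0 < m -> m <= #|Bx S u| -> degS S u - m <= 1 ->
  (forall v, v \in Bx S u -> forall y, y \in nbhd e v :&: S -> degS S y != 2) ->
  (forall S' : {set T}, #|S'| < #|S| -> colorable S') ->
  (degS S u - m) * d + m.-1 < q -> (degS S u).-1 %/ k.-1 + d + 1 < q ->
  (degS S u).-1 %/ k.-1 + d + (degS S u - m) < q -> colorable S.
Proof.
move=> uS m0 mB dm Hno IH qA qB qC.
have szv : size (take m (enum (Bx S u))) = m by rewrite size_takel // -cardE.
have U0 : uniq (take m (enum (Bx S u))) by apply: take_uniq; apply: enum_uniq.
have inB v : v \in take m (enum (Bx S u)) -> v \in Bx S u.
  by move=> /mem_take; rewrite mem_enum.
move: szv U0 inB; case: (take m (enum (Bx S u))) => [|x s] /=; first by move=> E; move: m0; rewrite -E.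
move=> szv U0 inB.
have vsE : rcons (belast x s) (last x s) = x :: s by rewrite -lastI.
have Bp v : v \in Bx S u -> [/\ v \in S, degS S v = 2 & u \in nbhd e v :&: S].
  by rewrite !inE => /andP[/andP[euv vS] /eqP dv]; rewrite vS dv esym euv uS.
have vsN : [set y in x :: s] \subset nbhd e u :&: S.
  by apply/subsetP => y; rewrite inE => /inB; rewrite inE => /andP[].
have cvs : #|[set y in x :: s]| = m by rewrite cardsE (card_uniqP (U0 : uniq (x :: s))).
set R := (nbhd e u :&: S) :\: [set y in x :: s].
have cR : #|R| = degS S u - m.
  by rewrite cardsD /degS (setIidPr vsN) cvs.
apply: (conf_multi (vs' := belast x s) (vl := last x s) (wf := fun v => other S v u) (R := R)).
- exact: uS.
- by rewrite vsE.
- rewrite vsE => v /inB /Bp [vS dv uN]; split => //; exact: (nbhd_two dv uN).1.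
- rewrite vsE => v vv; have [vS dv uN] := Bp v (inB v vv).
  have [Nv ou] := nbhd_two dv uN; split => //.
  have oN : other S v u \in nbhd e v :&: S by rewrite Nv set22.
  have := Hno v (inB v vv) _ oN; apply: contra => /inB /Bp [_ -> _].
  by [].
- rewrite vsE; apply/setP => y; rewrite /R !inE.
  by move: (subsetP vsN y); rewrite !inE; case: (y == x); case: (y \in s); case: (e u y); case: (y \in S) => // /(_ isT).
- by rewrite cR.
- apply: IH; apply: proper_card; apply/properP; split.
    by apply/subsetP => y; rewrite !inE => /andP[_ ->].
  by exists u; rewrite // !inE eqxx.
- by move: qA; rewrite cR size_belast -szv.
- exact: qB.
- by rewrite cR.
Qed.

Lemma sumB (S : {set T}) x : \sum_(y in Bset S | e x y) 1 = #|Bx S x|.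
Proof.
rewrite sum1dep_card; apply: eq_card => y; rewrite /Bset /Bx !inE.
by case: (e x y); case: (y \in S); rewrite /= ?andbT ?andbF.
Qed.

Lemma Bx_le (S : {set T}) x : #|Bx S x| <= degS S x.
Proof. by apply: subset_leq_card; apply/subsetP => y; rewrite inE => /andP[]. Qed.

Lemma nA_all (S : {set T}) y : y \in Bset S ->
  (forall z, z \in nbhd e y :&: S -> 3 <= degS S z) ->
  #|[set x in Aset S | e y x]| = 2.
Proof.
move=> yB H; rewrite inE in yB; case/andP: yB => _ /eqP dy.
rewrite -dy /degS; apply: eq_card => z; rewrite !inE.
case ez: (e y z); case zS: (z \in S); rewrite ?andbF ?andbT //=.
by apply: H; rewrite !inE ez zS.
Qed.

Lemma IHD (S : {set T}) v : (forall S' : {set T}, #|S'| < #|S| -> colorable S') -> v \in S ->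
  colorable (S :\ v).
Proof. by move=> IH vS; apply: IH; rewrite (cardsD1 v S) vS. Qed.

Lemma k3 : 3 <= k.-1.
Proof. lia. Qed.

Lemma div_small3 : 3 %/ k.-1 <= 1.
Proof. exact: (leq_trans (leq_div2l 3 (isT : 0 < 3) k3)). Qed.

Lemma div_small4 : 4 %/ k.-1 <= 1.
Proof. exact: (leq_trans (leq_div2l 4 (isT : 0 < 3) k3)). Qed.

Lemma div_small2 : 2 %/ k.-1 = 0.
Proof. by rewrite divn_small //; apply: leq_trans k3. Qed.

Lemma step3 : q = d + 3 -> (forall S : {set T}, S != set0 -> \sum_(v in S) degS S v < 3 * #|S|) ->
  forall S : {set T}, (forall S' : {set T}, #|S'| < #|S| -> colorable S') -> colorable S.
Proof.
move=> qE sp S IH.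
case: (eqVneq S set0) => [->|SS]; first exact: val_nil.
have dd := d2.
case: (boolP [exists v in S, degS S v <= 1]) => [/exists_inP [v vS dv]|/exists_inPn H1].
  by apply: (conf_one vS dv (IHD IH vS)); rewrite qE addnS ltnS leq_addr.
have d2S x : x \in S -> 2 <= degS S x by move=> /H1; rewrite -ltnNge.
case: (boolP [exists v in S, [exists u in nbhd e v :&: S, (degS S v == 2) && (degS S u <= 3)]])
  => [/exists_inP [v vS /exists_inP [u uN /andP[/eqP dv du]]]| /exists_inPn H2].
  have [Nv ou] := nbhd_two dv uN.
  have vS' : v \notin S :\ v by rewrite !inE eqxx.
  have uS : u \in S by move: uN; rewrite inE => /andP[].
  have euv : e u v by move: uN; rewrite !inE esym => /andP[].
  have oN : other S v u \in nbhd e v :&: S by rewrite Nv set22.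
  have eov : e (other S v u) v by move: oN; rewrite !inE esym => /andP[].
  have dvu : degS (S :\ v) u <= 2.
    have := degS_lt (subsetDl S [set v]) vS _ euv.
    rewrite setDE !inE eqxx andbF => /(_ isT); move: du; clear; lia.
  have dvu2 := dvu.
  apply: (conf_two (u:=u) (w:=other S v u) (su := 0) (sw := d.-1) (du := 2)) vS _ Nv (IHD IH vS) _ _ dvu _ _.
  - by rewrite eq_sym.
  - move=> c; rewrite Sat_nil //; apply: (leq_ltn_trans dvu2).
    exact: k3.
  - by move=> c; have := Sat_bound c vS' eov; case: (d).
  - by rewrite qE; move: dd; clear; lia.
  - by rewrite qE; move: dd; clear; lia.
have Hno u : u \in S -> forall v, v \in Bx S u -> forall y, y \in nbhd e v :&: S -> degS S y != 2.
  move=> uS v; rewrite !inE => /andP[/andP[euv vS] /eqP dv] y yN.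
  have := H2 v vS; apply: contra => /eqP dy.
  by apply/exists_inP; exists y => //; rewrite dv dy.
case: (boolP [exists u in S, (degS S u == 4) && (3 <= #|Bx S u|)])
  => [/exists_inP [u uS /andP[/eqP du bu]]|/exists_inPn H3].
  apply: (conf_multi' (m := 3) uS _ bu _ (Hno u uS) IH); rewrite ?du ?qE //=.
  - by move: dd; clear; lia.
  - by have := div_small3; move: dd; clear; lia.
  - by have := div_small3; move: dd; clear; lia.
case: (boolP [exists u in S, (degS S u == 5) && (5 <= #|Bx S u|)])
  => [/exists_inP [u uS /andP[/eqP du bu]]|/exists_inPn H4].
  apply: (conf_multi' (m := 5) uS _ bu _ (Hno u uS) IH); rewrite ?du ?qE //=.
  - by move: dd; clear; lia.
  - by have := div_small4; move: dd; clear; lia.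
  - by have := div_small4; move: dd; clear; lia.
exfalso.
have HA x : x \in Aset S -> 6 + \sum_(y in Bset S | e x y) 1 <= 2 * degS S x.
  rewrite inE sumB => /andP[xS dx].
  have Hb := Bx_le S x.
  case: (eqVneq (degS S x) 3) => [d3|n3].
    suff -> : #|Bx S x| = 0 by rewrite d3.
    apply/eqP; rewrite cards_eq0; apply/eqP/setP => y; rewrite !inE.
    apply/negbTE/negP => /andP[/andP[exy yS] /eqP dy].
    move: (H2 y yS); apply/negP/negPn/exists_inP; exists x.
      by rewrite !inE esym exy xS.
    by rewrite dy d3.
  case: (eqVneq (degS S x) 4) => [d4|n4].
    have := H3 x xS; rewrite d4 /= -ltnNge => Hx.
    by move: Hx; clear; lia.
  case: (eqVneq (degS S x) 5) => [d5|n5].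
    have := H4 x xS; rewrite d5 /= -ltnNge => Hx.
    by move: Hx; clear; lia.
  move: dx n3 n4 n5 Hb; clear; lia.
have HB y : y \in Bset S -> 1 * #|[set x in Aset S | e y x]| = 2.
  move=> yB; rewrite mul1n; apply: nA_all => // z zN.
  move: (yB); rewrite inE => /andP[yS dy].
  have := H2 y yS; rewrite negb_exists_in => /forall_inP /(_ z zN).
  by rewrite dy /= -ltnNge => /ltnW.
have := discharge (al := 2) (be := 6) (w := fun _ => 1) d2S HA HB erefl.
have := sp S SS.
lia.
Qed.

Lemma step2 : q = d + 2 -> (forall S : {set T}, S != set0 -> 3 * \sum_(v in S) degS S v < 8 * #|S|) ->
  forall S : {set T}, (forall S' : {set T}, #|S'| < #|S| -> colorable S') -> colorable S.
Proof.
move=> qE sp S IH.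
case: (eqVneq S set0) => [->|SS]; first exact: val_nil.
have dd := d2.
case: (boolP [exists v in S, degS S v <= 1]) => [/exists_inP [v vS dv]|/exists_inPn H1].
  by apply: (conf_one vS dv (IHD IH vS)); rewrite qE addnS ltnS leq_addr.
have d2S x : x \in S -> 2 <= degS S x by move=> /H1; rewrite -ltnNge.
case: (boolP [exists v in S, [exists u in nbhd e v :&: S, (degS S v == 2) && (degS S u == 2)]])
  => [/exists_inP [v vS /exists_inP [u uN /andP[/eqP dv /eqP du]]]| /exists_inPn H2].
  have [Nv ou] := nbhd_two dv uN.
  have vS' : v \notin S :\ v by rewrite !inE eqxx.
  have euv : e u v by move: uN; rewrite !inE esym => /andP[].
  have oN : other S v u \in nbhd e v :&: S by rewrite Nv set22.
  have eov : e (other S v u) v by move: oN; rewrite !inE esym => /andP[].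
  have dvu : degS (S :\ v) u <= 1.
    have := degS_lt (subsetDl S [set v]) vS _ euv.
    rewrite setDE !inE eqxx andbF => /(_ isT); move: du; clear; lia.
  have dvu2 := dvu.
  apply: (conf_two (u:=u) (w:=other S v u) (su := 0) (sw := d.-1) (du := 1)) vS _ Nv (IHD IH vS) _ _ dvu _ _.
  - by rewrite eq_sym.
  - move=> c; rewrite Sat_nil //; apply: (leq_ltn_trans dvu2).
    by apply: leq_trans k3.
  - by move=> c; have := Sat_bound c vS' eov; case: (d).
  - by rewrite qE; move: dd; clear; lia.
  - by rewrite qE; move: dd; clear; lia.
have Hno u : u \in S -> forall v, v \in Bx S u -> forall y, y \in nbhd e v :&: S -> degS S y != 2.
  move=> uS v; rewrite !inE => /andP[/andP[euv vS] /eqP dv] y yN.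
  have := H2 v vS; apply: contra => /eqP dy.
  by apply/exists_inP; exists y => //; rewrite dv dy.
case: (boolP [exists u in S, (degS S u == 3) && (2 <= #|Bx S u|)])
  => [/exists_inP [u uS /andP[/eqP du bu]]|/exists_inPn H3].
  apply: (conf_multi' (m := 2) uS _ bu _ (Hno u uS) IH); rewrite ?du ?qE ?div_small2 //=.
  - by move: dd; clear; lia.
  - by move: dd; clear; lia.
  - by move: dd; clear; lia.
exfalso.
have HA x : x \in Aset S -> 8 + \sum_(y in Bset S | e x y) 1 <= 3 * degS S x.
  rewrite inE sumB => /andP[xS dx].
  have Hb := Bx_le S x.
  case: (eqVneq (degS S x) 3) => [d3|n3].
    have := H3 x xS; rewrite d3 /= -ltnNge => Hx.
    by move: Hx; clear; lia.
  move: dx n3 Hb; clear; lia.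
have HB y : y \in Bset S -> 1 * #|[set x in Aset S | e y x]| = 2.
  move=> yB; rewrite mul1n; apply: nA_all => // z zN.
  move: (yB); rewrite inE => /andP[yS dy].
  have := H2 y yS; rewrite negb_exists_in => /forall_inP /(_ z zN).
  rewrite dy /=; have : z \in S by move: zN; rewrite inE => /andP[].
  move=> /d2S; move: (degS S z); clear; lia.
have := discharge (al := 3) (be := 8) (w := fun _ => 1) d2S HA HB erefl.
have := sp S SS.
lia.
Qed.

Lemma other_eq (S : {set T}) v w u : degS S v = 2 -> w \in nbhd e v :&: S ->
  u \in nbhd e v :&: S -> u != w -> nbhd e v :&: S = [set w; u].
Proof.
move=> dv wN uN uw; have [Nv _] := nbhd_two dv wN.
have : u \in [set w; other S v w] by rewrite -Nv.
by rewrite !inE (negbTE uw) /= => /eqP ->.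
Qed.

Lemma step1 : q = d + 1 -> (forall S : {set T}, S != set0 -> 5 * \sum_(v in S) degS S v < 12 * #|S|) ->
  forall S : {set T}, (forall S' : {set T}, #|S'| < #|S| -> colorable S') -> colorable S.
Proof.
move=> qE sp S IH.
case: (eqVneq S set0) => [->|SS]; first exact: val_nil.
have dd := d2.
case: (boolP [exists v in S, degS S v <= 1]) => [/exists_inP [v vS dv]|/exists_inPn H1].
  by apply: (conf_one vS dv (IHD IH vS)); rewrite qE addn1.
have d2S x : x \in S -> 2 <= degS S x by move=> /H1; rewrite -ltnNge.
case: (boolP [exists v in S, [exists w in nbhd e v :&: S, [exists u in nbhd e v :&: S,
     [&& degS S v == 2, degS S w == 2, u != w & degS S u <= k.-1]]]])
  => [/exists_inP [v vS /exists_inP [w wN /exists_inP [u uN /and4P[/eqP dv /eqP dw uw du]]]]|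
      /exists_inPn H2].
  have Nv := other_eq dv wN uN uw.
  have vS' : v \notin S :\ v by rewrite !inE eqxx.
  have ewv : e w v by move: wN; rewrite !inE esym => /andP[].
  have euv : e u v by move: uN; rewrite !inE esym => /andP[].
  have dvw : degS (S :\ v) w <= 1.
    have := degS_lt (subsetDl S [set v]) vS _ ewv.
    rewrite setDE !inE eqxx andbF => /(_ isT); move: dw; clear; lia.
  have dvw2 := dvw.
  have dvu : degS (S :\ v) u < k.-1.
    have := degS_lt (subsetDl S [set v]) vS _ euv.
    rewrite setDE !inE eqxx andbF => /(_ isT) H; exact: leq_trans H du.
  apply: (conf_two (u:=w) (w:=u) (su := 0) (sw := 0) (du := 1)) vS _ Nv (IHD IH vS) _ _ dvw _ _.
  - by rewrite eq_sym.
  - move=> c; rewrite Sat_nil //; apply: (leq_ltn_trans dvw2).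
    by apply: leq_trans k3.
  - by move=> c; rewrite Sat_nil.
  - by rewrite qE; move: dd; clear; lia.
  - by rewrite qE; move: dd; clear; lia.
exfalso.
set nA := fun y => #|[set x in Aset S | e y x]|.
have nA2 y : y \in Bset S -> nA y <= 2.
  rewrite inE => /andP[yS /eqP dy]; rewrite /nA -dy; apply: subset_leq_card.
  by apply/subsetP => z; rewrite !inE => /andP[/andP[zS _] eyz]; rewrite eyz zS.
have nA1 y : y \in Bset S -> 0 < nA y.
  move=> yB; move: (yB); rewrite inE => /andP[yS /eqP dy].
  rewrite lt0n; apply/negP => /eqP nA0.
  have : 0 < degS S y by rewrite dy.
  rewrite card_gt0 => /set0Pn [w wN].
  have [Nv ow] := nbhd_two dy wN.
  have oN : other S y w \in nbhd e y :&: S by rewrite Nv set22.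
  have notA z : z \in nbhd e y :&: S -> degS S z = 2.
    move=> zN; move: (zN); rewrite !inE => /andP[eyz zS].
    have : z \notin [set x in Aset S | e y x].
      by apply/negP => zin; move: nA0; rewrite /nA (cardsD1 z) zin.
    rewrite !inE zS eyz /= andbT -ltnNge; have := d2S z zS; clear; lia.
  move: (H2 y yS); apply/negP/negPn/exists_inP; exists w => //.
  apply/exists_inP; exists (other S y w) => //.
  by rewrite dy (notA w wN) (notA _ oN) ow !eqxx /=; apply: leq_trans k3.
have HB y : y \in Bset S -> (3 - nA y) * #|[set x in Aset S | e y x]| = 2.
  move=> yB; have := nA2 y yB; have := nA1 y yB; rewrite /nA.
  by case: #|_| => [|[|[|]]].
have HA x : x \in Aset S -> 12 + \sum_(y in Bset S | e x y) (3 - nA y) <= 5 * degS S x.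
  move=> xA; move: (xA); rewrite inE => /andP[xS dx].
  have Hb := Bx_le S x.
  case: (eqVneq (degS S x) 3) => [d3|n3].
    have : \sum_(y in Bset S | e x y) (3 - nA y) <= \sum_(y in Bset S | e x y) 1.
      apply: leq_sum => y /andP[yB exy].
      move: (yB); rewrite inE => /andP[yS /eqP dy].
      have xN : x \in nbhd e y :&: S by rewrite !inE esym exy xS.
      have [Nv ox] := nbhd_two dy xN.
      have oN : other S y x \in nbhd e y :&: S by rewrite Nv set22.
      have oA : other S y x \in Aset S.
        rewrite inE; move: (oN); rewrite inE => /andP[_ oS]; rewrite oS /=.
        case: (leqP 3 (degS S (other S y x))) => // lt3.
        have do2 : degS S (other S y x) = 2 by move: lt3 (d2S _ oS); clear; lia.
        exfalso; move: (H2 y yS); apply/negP/negPn/exists_inP.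
        exists (other S y x) => //; apply/exists_inP; exists x => //.
        by rewrite dy do2 eq_sym ox d3 /=; apply: k3.
      have : nA y >= 2.
        have c2 : #|[set x; other S y x]| = 2 by rewrite cards2 eq_sym ox.
        rewrite /nA -c2; apply: subset_leq_card.
        apply/subsetP => z; rewrite !inE => /orP[]/eqP->.
          by rewrite xS dx esym exy.
        by move: oA oN; rewrite !inE => /andP[-> ->] /andP[-> _].
      clear; lia.
    rewrite sumB d3; move: Hb; rewrite d3; clear; lia.
  have : \sum_(y in Bset S | e x y) (3 - nA y) <= \sum_(y in Bset S | e x y) 2.
    by apply: leq_sum => y /andP[yB _]; have := nA1 y yB; clear; lia.
  have E : \sum_(y in Bset S | e x y) 2 = 2 * #|Bx S x|.
    by rewrite -sumB big_distrr /=; apply: eq_bigr => y _; rewrite muln1.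
  rewrite E.
  move: dx n3 Hb; clear; lia.
have := discharge (al := 5) (be := 12) (w := fun y => 3 - nA y) d2S HA HB erefl.
have := sp S SS.
lia.
Qed.

End Graph.

Lemma arcs_card (T : finType) (e : rel T) (S : {set T}) :
  #|[set x : T * T | e x.1 x.2 && (x.1 \in S) && (x.2 \in S)]| =
  \sum_(v in S) #|nbhd e v :&: S|.
Proof.
rewrite -sum1dep_card.
have -> : \sum_(x | e x.1 x.2 && (x.1 \in S) && (x.2 \in S)) 1 =
   \sum_(p | (p.1 \in S) && (p.2 \in S)) (if e p.1 p.2 then 1 else 0).
  rewrite big_mkcond [RHS]big_mkcond; apply: eq_bigr => [[x y]] _ /=.
  by case: (e x y); case: (x \in S); case: (y \in S).
rewrite -(pair_big (fun x => x \in S) (fun y => y \in S) (fun x y => if e x y then 1 else 0)) /=.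
apply: eq_bigr => v vS; rewrite -big_mkcondr sum1dep_card.
by apply: eq_card => y; rewrite !inE andbC.
Qed.

Lemma le_bigmax_rat (I : finType) (F : I -> rat) i : (F i <= \big[Num.max/0%R]_(j : I) F j)%R.
Proof.
move: (mem_index_enum i); rewrite unlock /=.
elim: (index_enum I) => [//|j r IH]; rewrite inE /= => /orP[/eqP<-|/IH H].
  by rewrite le_max lexx.
by rewrite le_max H orbT.
Qed.

Lemma rat_ineq (a b p s : nat) : 0 < b -> 0 < s ->
  (a%:R / b%:R < p%:R / s%:R :> rat)%R -> a * s < p * b.
Proof.
move=> b0 s0; rewrite ltr_pdivlMr ?ltr0n // mulrAC ltr_pdivrMr ?ltr0n //.
by rewrite -!natrM ltr_nat.
Qed.

Lemma sparse (T : finType) (e : rel T) (p s : nat) : symmetric e -> 0 < s ->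
  (mad e < p%:R / s%:R)%R -> forall S : {set T}, S != set0 ->
  s * \sum_(v in S) #|nbhd e v :&: S| < p * #|S|.
Proof.
move=> esym s0 Hm S SS.
set F := [set x : T * T | e x.1 x.2 && (x.1 \in S) && (x.2 \in S)].
have sub : is_subgraph e S F.
  apply/forallP => [[x y]]; apply/implyP; rewrite !inE /= => /andP[/andP[exy xS] yS].
  by rewrite exy xS yS esym exy.
have av : avg_deg e (S, F) = (#|F|%:R / #|S|%:R)%R by rewrite /avg_deg /= sub SS.
have := @le_bigmax_rat _ (avg_deg e) (S, F); rewrite -/(mad e) av => H.
have S0 : 0 < #|S| by rewrite card_gt0.
have := @rat_ineq #|F| #|S| p s S0 s0 (le_lt_trans H Hm).
by rewrite arcs_card mulnC.
Qed.

Lemma strong_ind (T : finType) (P : {set T} -> Prop) :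
  (forall S : {set T}, (forall S' : {set T}, #|S'| < #|S| -> P S') -> P S) ->
  forall S, P S.
Proof.
move=> H S; move: {2}#|S|.+1 (ltnSn #|S|) => n; elim: n S => [//|n IHn] S Sn.
apply: H => S' S'S; apply: IHn; apply: leq_trans S'S _; by rewrite -ltnS.
Qed.

Lemma valid_final (T : finType) (e : rel T) k (L : T -> seq nat) c :
  valid e k L setT c -> forested_coloring e k c /\ forall v, c v \in L v.
Proof.
case=> cL cP cF; split; last by move=> v; apply: cL; rewrite inE.
split; first by move=> u v; apply: cP; rewrite inE.
move=> a b ab; have [F D] := cF a b ab.
have -> : [set v | (c v == a) || (c v == b)] = pairset setT c a b.
  by apply/setP => v; rewrite !inE.
by split.
Qed.

Theorem theorem1p2 (M k : nat) (T : finType) (e : rel T) :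
  4 <= k -> k <= M -> simple_graph e -> max_degree_le e M ->
  [/\ (mad e < 12%:R / 5%:R)%R ->
        forested_choice_number_le e k (ceil_div M k.-1 + 1),
      (mad e < 8%:R / 3%:R)%R ->
        forested_choice_number_le e k (ceil_div M k.-1 + 2) &
      (mad e < 3%:R)%R ->
        forested_choice_number_le e k (ceil_div M k.-1 + 3)].
Proof.
move=> k4 kM [esym eirr] maxdeg; split => Hm.
- exists (ceil_div M k.-1 + 1) => // L Lok.
  have sp := sparse esym (isT : 0 < 5) Hm.
  have col := strong_ind (step1 esym eirr k4 kM maxdeg Lok erefl sp).
  have [c cv] := col setT.
  by exists c; apply: valid_final.
- exists (ceil_div M k.-1 + 2) => // L Lok.
  have sp := sparse esym (isT : 0 < 3) Hm.
  have col := strong_ind (step2 esym eirr k4 kM maxdeg Lok erefl sp).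
  have [c cv] := col setT.
  by exists c; apply: valid_final.
- exists (ceil_div M k.-1 + 3) => // L Lok.
  have Hm' : (mad e < 3%:R / 1%:R)%R by rewrite divr1.
  have sp0 := sparse esym (isT : 0 < 1) Hm'.
  have sp : forall S : {set T}, S != set0 -> \sum_(v in S) degS e S v < 3 * #|S|.
    by move=> S SS; have := sp0 S SS; rewrite mul1n.
  have col := strong_ind (step3 esym eirr k4 kM maxdeg Lok erefl sp).
  have [c cv] := col setT.
  by exists c; apply: valid_final.
Qed.
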